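(* Let $T>0$, $0<\eta<T$, $\alpha>0$ and $\beta\geq 0$ be constants with $\beta \neq \frac{2T-\alpha \eta ^{2}}{\alpha \eta ^{2}-2\eta+2T}$, and set $D=(\alpha \eta ^{2}-2T)-\beta (2\eta -\alpha \eta ^{2}-2T)$. Then for every $y\in C([0,T],\mathbb{R})$, the boundary value problem \[ u''(t)+y(t)=0,\ t\in(0,T),\qquad u(0)=\beta u(\eta),\quad u(T)=\alpha\int_0^\eta u(s)\,ds \] has a unique solution, given by \begin{align*} u(t)&=\frac{\beta (2T-\alpha \eta ^{2})-2\beta (1-\alpha \eta)t}{D}\int_{0}^{\eta }(\eta -s)y(s)\,ds +\frac{\alpha \beta\eta -\alpha (\beta -1)t}{D}\int_{0}^{\eta }(\eta -s)^{2}y(s)\,ds \\ &\quad+\frac{2(\beta-1)t-2\beta \eta }{D}\int_{0}^{T}(T-s)y(s)\,ds- \int_{0}^{t}(t-s)y(s)\,ds. \end{align*}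
   Context: Standing assumptions of the paper: $T>0$, $\eta\in(0,T)$, $\alpha>0$, $\beta\geq0$. A solution is a function $u\in C^2([0,T])$ satisfying the differential equation on $(0,T)$ and the two boundary conditions. *)

(* Defs.v *)
From Stdlib Require Import Reals.
From Coquelicot Require Import Coquelicot.
Open Scope R_scope.

Definition cont_on (a b : R) (f : R -> R) : Prop :=
  forall x, a <= x <= b -> forall eps, 0 < eps ->
    exists delta, 0 < delta /\
      forall z, a <= z <= b -> Rabs (z - x) < delta -> Rabs (f z - f x) < eps.

Definition deriv_on (a b : R) (f f' : R -> R) : Prop :=
  forall x, a <= x <= b -> forall eps, 0 < eps ->
    exists delta, 0 < delta /\
      forall z, a <= z <= b -> Rabs (z - x) < delta ->
        Rabs (f z - f x - f' x * (z - x)) <= eps * Rabs (z - x).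

Definition is_solution (T eta alpha beta : R) (y u : R -> R) : Prop :=
  exists u1 u2 : R -> R,
    deriv_on 0 T u u1 /\ deriv_on 0 T u1 u2 /\ cont_on 0 T u2 /\
    (forall t, 0 < t < T -> u2 t + y t = 0) /\
    u 0 = beta * u eta /\
    u T = alpha * RInt u 0 eta.

Definition sol_formula (T eta alpha beta : R) (y : R -> R) (t : R) : R :=
  let D := (alpha * eta ^ 2 - 2 * T) - beta * (2 * eta - alpha * eta ^ 2 - 2 * T) in
  (beta * (2 * T - alpha * eta ^ 2) - 2 * beta * (1 - alpha * eta) * t) / D
    * RInt (fun s => (eta - s) * y s) 0 eta
  + (alpha * beta * eta - alpha * (beta - 1) * t) / D
    * RInt (fun s => (eta - s) ^ 2 * y s) 0 eta
  + (2 * (beta - 1) * t - 2 * beta * eta) / D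
    * RInt (fun s => (T - s) * y s) 0 T
  - RInt (fun s => (t - s) * y s) 0 t.

(* Main.v *)
Require Import Defs.
From Stdlib Require Import Reals Lra Lia Psatz.
From Coquelicot Require Import Coquelicot.
Open Scope R_scope.

Definition clamp (a b x : R) := Rmax a (Rmin b x).

Lemma clamp_in a b x : a <= b -> a <= clamp a b x <= b.
Proof. intros; unfold clamp, Rmax, Rmin; repeat destruct Rle_dec; lra. Qed.

Lemma clamp_id a b x : a <= x <= b -> clamp a b x = x.
Proof. intros; unfold clamp, Rmax, Rmin; repeat destruct Rle_dec; lra. Qed.

Lemma clamp_lip a b x z : a <= b -> Rabs (clamp a b z - clamp a b x) <= Rabs (z - x).
Proof. intros; unfold clamp, Rmax, Rmin; repeat destruct Rle_dec;
  unfold Rabs; repeat destruct Rcase_abs; lra. Qed.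

Lemma clamp_cont a b f : a <= b -> cont_on a b f ->
  forall x, continuous (fun x => f (clamp a b x)) x.
Proof.
  intros Hab Hf x. apply continuity_pt_filterlim.
  intros eps Heps.
  destruct (Hf (clamp a b x) (clamp_in a b x Hab) eps Heps) as [d [Hd Hz]].
  exists d; split; auto. intros z [_ Hzx]. simpl in *. unfold R_dist in *.
  apply Hz. apply clamp_in; auto.
  eapply Rle_lt_trans. apply clamp_lip; auto. auto.
Qed.

Lemma deriv_interior a b f f' : deriv_on a b f f' ->
  forall x, a < x < b -> is_derive f x (f' x).
Proof.
  intros Hd x Hx. apply is_derive_Reals. intros eps Heps.
  destruct (Hd x ltac:(lra) (eps/2) ltac:(lra)) as [d [Hdp Hz]].
  assert (Hm : 0 < Rmin d (Rmin (x - a) (b - x))).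
  { repeat apply Rmin_pos; lra. }
  exists (mkposreal _ Hm). intros h Hh0 Hh. simpl in Hh.
  assert (Hh1 : Rabs h < d) by (eapply Rlt_le_trans; [apply Hh| apply Rmin_l]).
  assert (Hh2 : Rabs h < Rmin (x-a) (b-x)) by (eapply Rlt_le_trans; [apply Hh| apply Rmin_r]).
  assert (Hh3: Rabs h < x - a) by (eapply Rlt_le_trans; [apply Hh2| apply Rmin_l]).
  assert (Hh4: Rabs h < b - x) by (eapply Rlt_le_trans; [apply Hh2| apply Rmin_r]).
  assert (Hz' := Hz (x+h)).
  replace (x + h - x) with h in Hz' by ring.
  assert (Hr : a <= x + h <= b) by (revert Hh3 Hh4; unfold Rabs; destruct Rcase_abs; lra).
  specialize (Hz' Hr Hh1).
  replace ((f (x + h) - f x) / h - f' x) with ((f (x + h) - f x - f' x * h) / h) by (field; auto).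
  unfold Rdiv. rewrite Rabs_mult, Rabs_inv.
  assert (0 < Rabs h) by (apply Rabs_pos_lt; auto).
  apply (Rmult_lt_reg_r (Rabs h)); auto.
  rewrite Rmult_assoc, Rinv_l by lra. nra.
Qed.

Lemma deriv_cont a b f f' : deriv_on a b f f' -> cont_on a b f.
Proof.
  intros Hd x Hx eps Heps.
  destruct (Hd x Hx 1 Rlt_0_1) as [d [Hdp Hz]].
  set (K := Rabs (f' x) + 2).
  assert (HK : 0 < K) by (unfold K; pose proof (Rabs_pos (f' x)); lra).
  assert (Hm : 0 < Rmin d (eps / K)) by (apply Rmin_pos; [lra| apply Rdiv_lt_0_compat; lra]).
  exists (Rmin d (eps/K)); split; auto.
  intros z Hzab Hzx.
  assert (H1 : Rabs (z - x) < d) by (eapply Rlt_le_trans; [apply Hzx| apply Rmin_l]).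
  assert (H2 : Rabs (z - x) < eps / K) by (eapply Rlt_le_trans; [apply Hzx| apply Rmin_r]).
  specialize (Hz z Hzab H1).
  assert (H3 : Rabs (f z - f x) <= Rabs (f z - f x - f' x * (z - x)) + Rabs (f' x) * Rabs (z - x)).
  { rewrite <- Rabs_mult. replace (f z - f x) with ((f z - f x - f' x * (z - x)) + f' x * (z - x)) at 1 by ring.
    apply Rabs_triang. }
  assert (H4 : K * Rabs (z - x) < eps).
  { apply (Rmult_lt_reg_r (/K)). apply Rinv_0_lt_compat; auto.
    rewrite Rmult_comm, <- Rmult_assoc, Rinv_l by lra. lra. }
  pose proof (Rabs_pos (z - x)). unfold K in H4. nra.
Qed.

Lemma deriv_of_global a b f df g dg :
  (forall x, a <= x <= b -> is_derive f x (df x)) ->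
  (forall x, a <= x <= b -> g x = f x) ->
  (forall x, a <= x <= b -> dg x = df x) -> deriv_on a b g dg.
Proof.
  intros Hf Hg Hdg x Hx eps Heps.
  destruct (proj1 (is_derive_Reals _ _ _) (Hf x Hx) eps Heps) as [d Hd].
  exists d; split; [apply cond_pos|].
  intros z Hz Hzx. rewrite Hg, (Hg x), Hdg by auto.
  destruct (Req_dec z x) as [E|E].
  { subst. replace (f x - f x - df x * (x - x)) with 0 by ring. rewrite Rabs_R0.
    replace (x - x) with 0 by ring. rewrite Rabs_R0. lra. }
  assert (Hh : z - x <> 0) by lra.
  specialize (Hd (z - x) Hh Hzx). replace (x + (z - x)) with z in Hd by ring.
  replace (f z - f x - df x * (z - x)) with (((f z - f x) / (z - x) - df x) * (z - x)) by (field; auto).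
  rewrite Rabs_mult. pose proof (Rabs_pos (z - x)). nra.
Qed.

Lemma const_on a b f : a < b -> cont_on a b f ->
  (forall x, a < x < b -> is_derive f x 0) -> forall x, a <= x <= b -> f x = f a.
Proof.
  intros Hab Hc Hd x Hx.
  destruct (Req_dec x a) as [E|E]; [subst; auto|].
  set (fe := fun x => f (clamp a b x)).
  assert (Hfe : forall z, a <= z <= b -> fe z = f z) by (intros; unfold fe; rewrite clamp_id; auto).
  destruct (MVT_gen fe a x (fun _ => 0)) as [c [Hc1 Hc2]].
  - intros c Hc'. rewrite Rmin_left, Rmax_right in Hc' by lra.
    apply (is_derive_ext_loc f). 2: apply Hd; lra.
    assert (Hm : 0 < Rmin (c - a) (b - c)) by (apply Rmin_pos; lra).
    exists (mkposreal _ Hm). intros t Ht. unfold ball in Ht; simpl in Ht.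
    unfold AbsRing_ball, abs, minus, plus, opp in Ht; simpl in Ht.
    assert (Ht1: Rabs (t + - c) < c - a) by (eapply Rlt_le_trans; [apply Ht| apply Rmin_l]).
    assert (Ht2: Rabs (t + - c) < b - c) by (eapply Rlt_le_trans; [apply Ht| apply Rmin_r]).
    symmetry; apply Hfe. revert Ht1 Ht2; unfold Rabs; destruct Rcase_abs; lra.
  - intros; apply continuity_pt_filterlim; apply (clamp_cont a b f); [lra|auto].
  - rewrite Hfe, Hfe in Hc2 by lra. lra.
Qed.

Definition Q (f : R -> R) (k : nat) (t : R) := RInt (fun s => s ^ k * f s) 0 t.

Lemma cont_pk f k : (forall x, continuous f x) -> forall x, continuous (fun s => s ^ k * f s) x.
Proof.
  intros Hc x. apply (continuous_mult (fun s => s ^ k) f). 2: auto.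
  apply (@ex_derive_continuous R_AbsRing R_NormedModule). auto_derive. auto.
Qed.

Lemma ex_pk f k a b : (forall x, continuous f x) -> ex_RInt (fun s => s ^ k * f s) a b.
Proof. intros; apply (@ex_RInt_continuous R_CompleteNormedModule); intros; apply cont_pk; auto. Qed.

Lemma Q_der f k : (forall x, continuous f x) -> forall t, is_derive (Q f k) t (t ^ k * f t).
Proof.
  intros Hc t. apply (is_derive_RInt (fun s => s ^ k * f s) (Q f k) 0 t).
  - apply filter_forall. intros; unfold Q; apply (@RInt_correct R_CompleteNormedModule), ex_pk; auto.
  - apply cont_pk; auto.
Qed.

Lemma Q0 f k : Q f k 0 = 0.
Proof. unfold Q. rewrite RInt_point. reflexivity. Qed.

Lemma RInt_comb f a0 a1 a2 t : (forall x, continuous f x) ->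
  RInt (fun s => (a0 + a1 * s + a2 * s ^ 2) * f s) 0 t = a0 * Q f 0 t + a1 * Q f 1 t + a2 * Q f 2 t.
Proof.
  intros Hc. apply is_RInt_unique.
  assert (H := is_RInt_plus _ _ _ _ _ _ (is_RInt_plus _ _ _ _ _ _
     (is_RInt_scal _ _ _ a0 _ (RInt_correct _ 0 t (ex_pk f 0 0 t Hc)))
     (is_RInt_scal _ _ _ a1 _ (RInt_correct _ 0 t (ex_pk f 1 0 t Hc))))
     (is_RInt_scal _ _ _ a2 _ (RInt_correct _ 0 t (ex_pk f 2 0 t Hc)))).
  eapply is_RInt_ext. 2: apply H.
  intros x _. unfold plus, scal; simpl. unfold mult; simpl. ring.
Qed.

Lemma cont_of_global a b f : (forall x, continuous f x) -> cont_on a b f.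
Proof.
  intros Hc x _ eps Heps.
  destruct (proj2 (continuity_pt_filterlim f x) (Hc x) eps Heps) as [d [Hd Hz]].
  exists d; split; auto. intros z _ Hzx. destruct (Req_dec z x) as [E|E].
  { subst. replace (f x - f x) with 0 by ring. rewrite Rabs_R0; lra. }
  apply (Hz z). split; [split; [exact I| auto]| exact Hzx].
Qed.

Lemma cont_on_plus a b f g : cont_on a b f -> cont_on a b g -> cont_on a b (fun t => f t + g t).
Proof.
  intros Hf Hg x Hx eps Heps.
  destruct (Hf x Hx (eps/2) ltac:(lra)) as [d1 [Hd1 H1]].
  destruct (Hg x Hx (eps/2) ltac:(lra)) as [d2 [Hd2 H2]].
  exists (Rmin d1 d2); split; [apply Rmin_pos; auto|].
  intros z Hz Hzx.
  assert (A1 : Rabs (z - x) < d1) by (eapply Rlt_le_trans; [apply Hzx| apply Rmin_l]).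
  assert (A2 : Rabs (z - x) < d2) by (eapply Rlt_le_trans; [apply Hzx| apply Rmin_r]).
  specialize (H1 z Hz A1). specialize (H2 z Hz A2).
  replace (f z + g z - (f x + g x)) with ((f z - f x) + (g z - g x)) by ring.
  eapply Rle_lt_trans. apply Rabs_triang. lra.
Qed.

Lemma Deta (f : R -> R) x l : is_derive f x l -> Derive (fun s => f s) x = l.
Proof. intros H. apply is_derive_unique. exact H. Qed.

Lemma cont_on_ext_plus a b f g h : cont_on a b g -> (forall x, continuous h x) ->
  (forall t, f t = g t + h t) -> cont_on a b f.
Proof.
  intros Hg Hh Hf. assert (H := cont_on_plus a b g h Hg (cont_of_global a b h Hh)).
  intros x Hx eps Heps. destruct (H x Hx eps Heps) as [d [Hd Hz]].
  exists d; split; auto. intros z Hz1 Hz2. rewrite !Hf. auto.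
Qed.

Theorem lemma2p1 (T eta alpha beta : R) (y : R -> R)
  (hT : 0 < T) (heta : 0 < eta < T) (halpha : 0 < alpha) (hbeta : 0 <= beta)
  (hbetaD : beta <> (2 * T - alpha * eta ^ 2) / (alpha * eta ^ 2 - 2 * eta + 2 * T))
  (hy : cont_on 0 T y) :
  forall u : R -> R,
    is_solution T eta alpha beta y u <->
    (forall t, 0 <= t <= T -> u t = sol_formula T eta alpha beta y t).
Proof.
  intros u.
  set (D := (alpha * eta ^ 2 - 2 * T) - beta * (2 * eta - alpha * eta ^ 2 - 2 * T)).
  assert (Hden : 0 < alpha * eta ^ 2 - 2 * eta + 2 * T) by nra.
  assert (HD : D <> 0).
  { intro HD0. apply hbetaD. apply (Rmult_eq_reg_r (alpha * eta ^ 2 - 2 * eta + 2 * T)); [|lra].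
    unfold Rdiv. rewrite Rmult_assoc, Rinv_l by lra. unfold D in HD0. nra. }
  set (ye := fun x => y (clamp 0 T x)).
  assert (Hyc : forall x, continuous ye x) by (apply clamp_cont; [lra|auto]).
  assert (Hye : forall x, 0 <= x <= T -> ye x = y x) by (intros; unfold ye; rewrite clamp_id; auto).
  assert (Hcomb : forall a0 a1 a2 t (g : R -> R), 0 <= t <= T ->
            (forall s, g s = a0 + a1 * s + a2 * s ^ 2) ->
            RInt (fun s => g s * y s) 0 t = a0 * Q ye 0 t + a1 * Q ye 1 t + a2 * Q ye 2 t).
  { intros a0 a1 a2 t g Ht Hg. rewrite <- RInt_comb by auto. apply RInt_ext.
    intros x Hx. rewrite Rmin_left, Rmax_right in Hx by lra. rewrite Hg, Hye by lra. reflexivity. }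
  set (Y1 := eta * Q ye 0 eta - Q ye 1 eta).
  set (Y2 := eta ^ 2 * Q ye 0 eta - 2 * eta * Q ye 1 eta + Q ye 2 eta).
  set (Y3 := T * Q ye 0 T - Q ye 1 T).
  assert (Hform : forall t, 0 <= t <= T -> sol_formula T eta alpha beta y t =
     (beta * (2 * T - alpha * eta ^ 2) - 2 * beta * (1 - alpha * eta) * t) / D * Y1
     + (alpha * beta * eta - alpha * (beta - 1) * t) / D * Y2
     + (2 * (beta - 1) * t - 2 * beta * eta) / D * Y3
     - (t * Q ye 0 t - Q ye 1 t)).
  { intros t Ht. unfold sol_formula. cbv zeta. fold D.
    rewrite (Hcomb eta (-1) 0 eta (fun s => eta - s)) by (lra || (intros; cbv beta; ring)).
    rewrite (Hcomb (eta^2) (-2 * eta) 1 eta (fun s => (eta - s)^2)) by (lra || (intros; cbv beta; ring)).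
    rewrite (Hcomb T (-1) 0 T (fun s => T - s)) by (lra || (intros; cbv beta; ring)).
    rewrite (Hcomb t (-1) 0 t (fun s => t - s)) by (lra || (intros; cbv beta; ring)).
    unfold Y1, Y2, Y3. ring. }
  assert (HI : forall A B, RInt (fun t => A + B * t - (t * Q ye 0 t - Q ye 1 t)) 0 eta =
      A * eta + B * eta ^ 2 / 2 - Y2 / 2).
  { intros A B. apply is_RInt_unique.
    set (Hh := fun t => A * t + B * t ^ 2 / 2 - (t ^ 2 * Q ye 0 t - 2 * t * Q ye 1 t + Q ye 2 t) / 2).
    assert (E : Hh eta - Hh 0 = A * eta + B * eta ^ 2 / 2 - Y2 / 2)
      by (unfold Hh; rewrite !Q0; unfold Y2; field).
    rewrite <- E. change (Hh eta - Hh 0) with (minus (Hh eta) (Hh 0)).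
    apply (@is_RInt_derive R_CompleteNormedModule).
    - intros x _. unfold Hh. auto_derive.
      + repeat split; eexists; apply Q_der; auto.
      + rewrite (Deta _ _ _ (Q_der ye 0 Hyc x)).
        rewrite (Deta _ _ _ (Q_der ye 1 Hyc x)).
        rewrite (Deta _ _ _ (Q_der ye 2 Hyc x)). field.
    - intros x _. apply (@ex_derive_continuous R_AbsRing R_NormedModule). auto_derive.
      repeat split; eexists; apply Q_der; auto. }
  split.
  - intros [u1 [u2 [Hd1 [Hd2 [Hc2 [Heq [Hb0 HbT]]]]]]].
    assert (Hw : forall t, 0 <= t <= T -> u1 t + Q ye 0 t = u1 0 + Q ye 0 0).
    { apply (const_on 0 T (fun t => u1 t + Q ye 0 t)); [lra| |].
      - apply cont_on_plus. eapply deriv_cont; eauto. apply cont_of_global.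
        intros; apply (@ex_derive_continuous R_AbsRing R_NormedModule); eexists; apply Q_der; auto.
      - intros x Hx. assert (H1 := deriv_interior _ _ _ _ Hd2 x Hx).
        auto_derive.
        + split; [eexists; eauto| split; [eexists; apply Q_der; auto| exact I]].
        + rewrite (Deta _ _ _ H1).
          rewrite (Deta _ _ _ (Q_der ye 0 Hyc x)).
          rewrite Hye by lra. specialize (Heq x Hx). simpl. lra. }
    rewrite Q0 in Hw.
    assert (Hv : forall t, 0 <= t <= T -> (fun t => u t - u1 0 * t + t * Q ye 0 t - Q ye 1 t) t
                    = (fun t => u t - u1 0 * t + t * Q ye 0 t - Q ye 1 t) 0).
    { apply (const_on 0 T (fun t => u t - u1 0 * t + t * Q ye 0 t - Q ye 1 t)); [lra| |].
      - apply (cont_on_ext_plus 0 T _ u (fun t => - u1 0 * t + t * Q ye 0 t - Q ye 1 t)).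
        + eapply deriv_cont; eauto.
        + intros; apply (@ex_derive_continuous R_AbsRing R_NormedModule).
          auto_derive. repeat split; eexists; apply Q_der; auto.
        + intros; ring.
      - intros x Hx. assert (H1 := deriv_interior _ _ _ _ Hd1 x Hx).
        auto_derive.
        + split; [exists (u1 x); exact H1|].
          split; [eexists; apply Q_der; auto|].
          split; [eexists; apply Q_der; auto| exact I].
        + rewrite (Deta _ _ _ H1).
          rewrite (Deta _ _ _ (Q_der ye 0 Hyc x)).
          rewrite (Deta _ _ _ (Q_der ye 1 Hyc x)).
          specialize (Hw x ltac:(lra)). simpl. lra. }
    assert (HuF : forall t, 0 <= t <= T -> u t = u 0 + u1 0 * t - (t * Q ye 0 t - Q ye 1 t)).
    { intros t Ht. specialize (Hv t Ht). simpl in Hv. rewrite !Q0 in Hv. lra. }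
    set (A := u 0) in *. set (B := u1 0) in *.
    rewrite (HuF eta) in Hb0 by lra. fold Y1 in Hb0.
    rewrite (HuF T) in HbT by lra. fold Y3 in HbT.
    rewrite (RInt_ext u (fun t => A + B * t - (t * Q ye 0 t - Q ye 1 t))) in HbT.
    2: { intros x Hx. rewrite Rmin_left, Rmax_right in Hx by lra. apply HuF; lra. }
    rewrite HI in HbT.
    intros t Ht. rewrite Hform, HuF by auto.
    set (P := t * Q ye 0 t - Q ye 1 t).
    assert (E1 : (1 - beta) * A - beta * eta * B + beta * Y1 = 0) by nra.
    assert (E2 : (2 - 2 * alpha * eta) * A + (2 * T - alpha * eta ^ 2) * B - 2 * Y3 + alpha * Y2 = 0) by nra.
    assert (EA : D * A = beta * (2 * T - alpha * eta ^ 2) * Y1 + alpha * beta * eta * Y2 - 2 * beta * eta * Y3).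
    { assert (Z : D * A - (beta * (2 * T - alpha * eta ^ 2) * Y1 + alpha * beta * eta * Y2 - 2 * beta * eta * Y3)
         = - ((2 * T - alpha * eta ^ 2) * ((1 - beta) * A - beta * eta * B + beta * Y1)
              + beta * eta * ((2 - 2 * alpha * eta) * A + (2 * T - alpha * eta ^ 2) * B - 2 * Y3 + alpha * Y2)))
        by (unfold D; ring).
      rewrite E1, E2 in Z. lra. }
    assert (EB : D * B = - 2 * beta * (1 - alpha * eta) * Y1 - alpha * (beta - 1) * Y2 + 2 * (beta - 1) * Y3).
    { assert (Z : D * B - (- 2 * beta * (1 - alpha * eta) * Y1 - alpha * (beta - 1) * Y2 + 2 * (beta - 1) * Y3)
         = - (- (2 - 2 * alpha * eta) * ((1 - beta) * A - beta * eta * B + beta * Y1)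
              + (1 - beta) * ((2 - 2 * alpha * eta) * A + (2 * T - alpha * eta ^ 2) * B - 2 * Y3 + alpha * Y2)))
        by (unfold D; ring).
      rewrite E1, E2 in Z. lra. }
    replace A with (D * A / D) by (field; auto).
    replace B with (D * B / D) by (field; auto).
    rewrite EA, EB. field. auto.
  - intros Hu.
    set (A' := (beta * (2 * T - alpha * eta ^ 2) * Y1 + alpha * beta * eta * Y2 - 2 * beta * eta * Y3) / D).
    set (B' := (- 2 * beta * (1 - alpha * eta) * Y1 - alpha * (beta - 1) * Y2 + 2 * (beta - 1) * Y3) / D).
    assert (Hu' : forall t, 0 <= t <= T -> u t = A' + B' * t - (t * Q ye 0 t - Q ye 1 t)).
    { intros t Ht. rewrite Hu, Hform by auto. unfold A', B'. field. auto. }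
    exists (fun t => B' - Q ye 0 t), (fun t => - y t).
    split; [|split; [|split; [|split; [|split]]]].
    + apply (deriv_of_global 0 T (fun t => A' + B' * t - (t * Q ye 0 t - Q ye 1 t))
               (fun t => B' - Q ye 0 t)); auto.
      intros x _. auto_derive.
      * repeat split; eexists; apply Q_der; auto.
      * rewrite (Deta _ _ _ (Q_der ye 0 Hyc x)).
        rewrite (Deta _ _ _ (Q_der ye 1 Hyc x)). simpl. ring.
    + apply (deriv_of_global 0 T (fun t => B' - Q ye 0 t) (fun t => - ye t)); auto.
      * intros x _. auto_derive.
        -- repeat split; eexists; apply Q_der; auto.
        -- rewrite (Deta _ _ _ (Q_der ye 0 Hyc x)). simpl. ring.
      * intros x Hx. rewrite Hye; auto.
    + intros x Hx eps Heps. destruct (hy x Hx eps Heps) as [d [Hd Hz]].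
      exists d; split; auto. intros z Hz1 Hz2.
      replace (- y z - - y x) with (- (y z - y x)) by ring. rewrite Rabs_Ropp. auto.
    + intros; ring.
    + rewrite !Hu' by lra. rewrite !Q0. fold Y1. replace (A' + B' * 0 - (0 * 0 - 0)) with A' by ring. unfold A', B'. unfold D. field. unfold D in HD. auto.
    + rewrite Hu' by lra. fold Y3.
      rewrite (RInt_ext u (fun t => A' + B' * t - (t * Q ye 0 t - Q ye 1 t))).
      2: { intros x Hx. rewrite Rmin_left, Rmax_right in Hx by lra. apply Hu'; lra. }
      rewrite HI. unfold A', B'. unfold D. field. unfold D in HD. auto.
Qed.
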